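(* Let $P$ be a Markovian kernel on $(E,\mathcal{B})$, $S_n=\frac1n\sum_{k=0}^{n-1}P^k$, and $m$ a nonzero finite positive measure. Assume the generalized drift condition: there exist measurable $V,b:E\to[0,\infty)$ and $C\in\mathcal{B}$ with $PV\le V-1+b1_C$ on $E$; and Condition D: for every $r>0$ there exists $N_0>0$ with $\sup_{n\ge N_0}m(1_{[V\le r]}S_n(b^2))<\infty$. Then there exists $n_0>0$ with $\inf_{n\ge n_0}m(S_n1_C)>0$. *)

(* Defs.v *)
From HB Require Import structures.
From mathcomp Require Import all_boot all_order all_algebra.
From mathcomp Require Import all_classical all_reals all_analysis.
Set Implicit Arguments. Unset Strict Implicit. Unset Printing Implicit Defensive.
Import Order.TTheory GRing.Theory Num.Theory.
Local Open Scope classical_set_scope.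
Local Open Scope ring_scope.
Local Open Scope ereal_scope.

Fixpoint kiter d (T : measurableType d) (R : realType)
  (P : R.-pker T ~> T) (f : T -> \bar R) (k : nat) : T -> \bar R :=
  match k with
  | 0 => f
  | k.+1 => fun x => \int[P x]_y kiter P f k y
  end.

Definition Sn d (T : measurableType d) (R : realType)
  (P : R.-pker T ~> T) (n : nat) (f : T -> \bar R) : T -> \bar R :=
  fun x => ((n%:R)^-1)%:E * \sum_(k < n) kiter P f k x.

(* Main.v *)
Require Import Defs.
From HB Require Import structures.
From mathcomp Require Import all_boot all_order all_algebra.
From mathcomp Require Import all_classical all_reals all_analysis.
From mathcomp Require Import measurable_realfun.
From mathcomp Require Import ring lra.
Import Order.TTheory GRing.Theory Num.Theory.
Local Open Scope classical_set_scope.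
Local Open Scope ring_scope.
Local Open Scope ereal_scope.

Section K.
Context d (E : measurableType d) (R : realType) (P : R.-pker E ~> E).

Definition NN (f : E -> \bar R) := (forall x, 0 <= f x) /\ measurable_fun [set: E] (f : E -> \bar R).

Lemma kiter_NN (f : E -> \bar R) (k : nat) : NN f -> NN (kiter P f k).
Proof.
move=> [f0 mf]; elim: k => [|k [IH0 IHm]] //=; split.
- by move=> x; apply: integral_ge0 => y _; exact: IH0.
- apply: measurable_fun_integral_kernel => //.
  by move=> U mU; exact: measurable_kernel.
Qed.

Lemma kiterD f h k x : NN f -> NN h ->
  kiter P (fun y => f y + h y) k x = kiter P f k x + kiter P h k x.
Proof.
move=> Nf Nh; elim: k x => [|k IH] x //=.
rewrite (eq_integral (fun y => kiter P f k y + kiter P h k y)); last first.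
  by move=> y _; rewrite IH.
have [f0 mf] := @kiter_NN f k Nf; have [h0 mh] := @kiter_NN h k Nh.
by rewrite ge0_integralD.
Qed.

Lemma kiterZ (c : R) f k x : (0 <= c)%R -> NN f ->
  kiter P (fun y => c%:E * f y) k x = c%:E * kiter P f k x.
Proof.
move=> c0 Nf; elim: k x => [|k IH] x //=.
rewrite (eq_integral (fun y => c%:E * kiter P f k y)); last first.
  by move=> y _; rewrite IH.
have [f0 mf] := @kiter_NN f k Nf.
by rewrite ge0_integralZl // lee_fin.
Qed.

Lemma kiter_le f h k x : NN f -> NN h -> (forall y, f y <= h y) ->
  kiter P f k x <= kiter P h k x.
Proof.
move=> Nf Nh fh; elim: k x => [|k IH] x //=.
have [f0 mf] := @kiter_NN f k Nf; have [h0 mh] := @kiter_NN h k Nh.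
by apply: ge0_le_integral => // y _; exact: IH.
Qed.

Lemma integral_P_cst x (c : R) : \int[P x]_y (c%:E) = c%:E.
Proof.
by rewrite (integral_cst (P x) measurableT) prob_kernel mule1.
Qed.


Lemma int_sum (F : nat -> E -> \bar R) n x : (forall j, NN (F j)) ->
  \int[P x]_y (\sum_(j < n) F j y) = \sum_(j < n) \int[P x]_y F j y.
Proof.
move=> NF; rewrite ge0_integral_sum //.
- by move=> j; exact: (NF j).2.
- by move=> j y _; exact: (NF j).1.
Qed.

Lemma drift_iter (V' g : E -> \bar R) : NN V' -> NN g ->
  (forall x, \int[P x]_y V' y + 1 <= V' x + g x) ->
  forall n x, kiter P V' n x + n%:R%:E <= V' x + \sum_(j < n) kiter P g j x.
Proof.
move=> NV Ng hd; elim=> [|n IH] x.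
  by rewrite big_ord0 /= !adde0.
have [k0 mk] := @kiter_NN V' n NV.
have e1 : \int[P x]_y (kiter P V' n y + n%:R%:E) =
          \int[P x]_y kiter P V' n y + n%:R%:E.
  rewrite ge0_integralD //; first by rewrite integral_P_cst.
have le1 : \int[P x]_y (kiter P V' n y + n%:R%:E) <=
           \int[P x]_y (V' y + \sum_(j < n) kiter P g j y).
  apply: ge0_le_integral => //.
  - by move=> y _; apply: adde_ge0 => //; rewrite lee_fin.
  - exact: emeasurable_funD.
  - apply: emeasurable_funD; first exact: NV.2.
    by apply: emeasurable_sum => j; exact: (@kiter_NN g j Ng).2.
have e2 : \int[P x]_y (V' y + \sum_(j < n) kiter P g j y) =
          \int[P x]_y V' y + \sum_(j < n) kiter P g j.+1 x.
  rewrite ge0_integralD //.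
  - by rewrite int_sum // => j; exact: kiter_NN.
  - by move=> y _; exact: NV.1.
  - exact: NV.2.
  - by move=> y _; apply: sume_ge0 => j _; exact: (@kiter_NN g j Ng).1.
  - by apply: emeasurable_sum => j; exact: (@kiter_NN g j Ng).2.
rewrite big_ord_recl /=.
rewrite (eq_bigr (fun j : 'I_n => kiter P g j.+1 x)); last first.
  by move=> j _.
rewrite e1 e2 in le1.
rewrite -natr1 EFinD addrA.
apply: le_trans (leeD le1 (lexx 1)) _.
rewrite addrAC addrA.
apply: leeD => //.
Qed.


Lemma NN_Z (c : R) f : (0 <= c)%R -> NN f -> NN (fun y => c%:E * f y).
Proof.
move=> c0 [f0 mf]; split; first by move=> x; apply: mule_ge0 => //; rewrite lee_fin.
exact: measurable_funeM.
Qed.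

Lemma NN_D f h : NN f -> NN h -> NN (fun y => f y + h y).
Proof.
move=> [f0 mf] [h0 mh]; split; first by move=> x; exact: adde_ge0.
exact: emeasurable_funD.
Qed.

Lemma NN_EFin (f : E -> R) : (forall x, 0 <= f x)%R -> measurable_fun setT f ->
  NN (fun y => (f y)%:E).
Proof.
move=> f0 mf; split; first by move=> x; rewrite lee_fin.
exact/measurable_EFinP.
Qed.

Lemma NN_Sn n f : NN f -> NN (Sn P n f).
Proof.
move=> Nf; rewrite /Sn; split.
- move=> x; apply: mule_ge0; first by rewrite lee_fin invr_ge0.
  by apply: sume_ge0 => j _; exact: (@kiter_NN f j Nf).1.
- apply: measurable_funeM; apply: emeasurable_sum => j.
  exact: (@kiter_NN f j Nf).2.
Qed.

Lemma Sn_bound (V' g B2 IC : E -> \bar R) (eps c : R) :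
  NN V' -> NN g -> NN B2 -> NN IC -> (0 < eps)%R -> (0 < c)%R ->
  (forall x, \int[P x]_y V' y + 1 <= V' x + g x) ->
  (forall y, g y <= eps%:E * B2 y + c%:E * IC y) ->
  forall n x, (0 < n)%N -> (V' x <= (n%:R / 2)%:E) ->
  (1 / 2)%:E <= eps%:E * Sn P n B2 x + c%:E * Sn P n IC x.
Proof.
move=> NV Ng NB NI e0 c0 hd hg n x n0 hV.
have h1 := @drift_iter V' g NV Ng hd n x.
set T := \sum_(j < n) kiter P g j x in h1.
set s1 := \sum_(j < n) kiter P B2 j x.
set s2 := \sum_(j < n) kiter P IC j x.
have s10 : 0 <= s1 by apply: sume_ge0 => j _; exact: (@kiter_NN B2 j NB).1.
have s20 : 0 <= s2 by apply: sume_ge0 => j _; exact: (@kiter_NN IC j NI).1.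
have NB' := @NN_Z eps B2 (ltW e0) NB; have NI' := @NN_Z c IC (ltW c0) NI.
have hT : T <= eps%:E * s1 + c%:E * s2.
  rewrite /T /s1 /s2 !ge0_sume_distrr; last 2 first.
  - by move=> j _; exact: (@kiter_NN IC j NI).1.
  - by move=> j _; exact: (@kiter_NN B2 j NB).1.
  rewrite -big_split /=; apply: lee_sum => j _.
  rewrite -(@kiterZ eps B2 j x (ltW e0) NB) -(@kiterZ c IC j x (ltW c0) NI) -kiterD //.
  by apply: kiter_le => //; exact: NN_D.
have vfin : V' x \is a fin_num.
  rewrite ge0_fin_numE; first exact: le_lt_trans hV (ltry _).
  exact: NV.1.
have hv : V' x = (fine (V' x))%:E by rewrite fineK.
have h3 : (n%:R / 2)%:E <= T.
  have h4 : (n%:R)%:E <= V' x + T.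
    apply: le_trans h1; apply: leeDr; exact: (@kiter_NN V' n NV).1.
  rewrite -leeBlDl // in h4; apply: le_trans h4.
  rewrite hv -EFinB lee_fin; rewrite hv lee_fin in hV.
  have : (0 <= n%:R :> R)%R by [].
  lra.
have h5 : (n%:R / 2)%:E <= eps%:E * s1 + c%:E * s2 := le_trans h3 hT.
rewrite /Sn muleCA (muleCA c%:E) -ge0_muleDr; last 2 first.
- by apply: mule_ge0 => //; rewrite lee_fin ltW.
- by apply: mule_ge0 => //; rewrite lee_fin ltW.
have nR : (0 < n%:R :> R)%R by rewrite ltr0n.
apply: le_trans (lee_wpmul2l _ h5); last by rewrite lee_fin invr_ge0 ltW.
rewrite -EFinM lee_fin le_eqVlt; apply/orP; left; apply/eqP; field.
by rewrite gt_eqF.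
Qed.

End K.
Arguments NN {d E R}.
Arguments NN_EFin {d E R}.
Arguments NN_Sn {d E R P}.
Arguments Sn_bound {d E R P}.

Theorem proposition3p10 (d : measure_display) (E : measurableType d)
  (R : realType) (P : R.-pker E ~> E)
  (m : {finite_measure set E -> \bar R}) (hm : 0 < m setT)
  (V b : E -> R) (C : set E)
  (mV : measurable_fun setT V) (mb : measurable_fun setT b)
  (V0 : forall x, (0 <= V x)%R) (b0 : forall x, (0 <= b x)%R)
  (mC : measurable C)
  (drift : forall x, \int[P x]_y (V y)%:E
                      <= (V x)%:E - 1 + (b x)%:E * (\1_C x)%:E)
  (condD : forall r : R, (0 < r)%R -> exists N0 : nat, (0 < N0)%N /\
     ereal_sup [set \int[m]_x ((\1_[set y | (V y <= r)%R] x)%:E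
                    * Sn P n (fun y => ((b y) ^+ 2)%:E) x)
               | n in [set n : nat | (N0 <= n)%N]] < +oo) :
  exists n0 : nat, (0 < n0)%N /\
    0 < ereal_inf [set \int[m]_x Sn P n (fun y => (\1_C y)%:E) x
                  | n in [set n : nat | (n0 <= n)%N]].
Proof.
have mA : forall r : R, measurable [set y | (V y <= r)%R].
  move=> r; have := measurable_fun_ler mV (measurable_cst r) measurableT
    (Y := [set true]) I.
  by rewrite setTI.
pose A (k : nat) := [set y | (V y <= k.+1%:R)%R].
have [k hk] : exists k, 0 < m (A k).
  apply/not_existsP => hA.
  have hA0 k : m (A k) = 0.
    apply/eqP; rewrite eq_le measure_ge0 andbT leNgt; apply/negP => h.
    exact: (hA k).
  have : m setT <= \sum_(0 <= k <oo) m (A k).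
    apply: measure_sigma_subadditive => //; first by move=> j; exact: mA.
    move=> y _; exists (Num.Def.archi_bound (V y)) => //.
    rewrite /A /=; apply: ltW; apply: lt_le_trans (archi_boundP (V0 y)) _.
    by rewrite ler_nat.
  rewrite eseries0; last by move=> i _ _; exact: hA0.
  by rewrite leNgt hm.
have [N0 [N0pos hsup]] := condD k.+1%:R (ltr0Sn _ _).
set S := [set _ | _ in _] in hsup.
pose V' := fun y => (V y)%:E.
pose g := fun y => (b y * \1_C y)%:E.
pose B2 := fun y => (b y ^+ 2)%:E.
pose IC := fun y => (\1_C y)%:E : \bar R.
have NV : NN V' by apply: NN_EFin.
have Ng : NN g.
  apply: NN_EFin; last by apply: measurable_funM => //; exact: measurable_indic.
  by move=> x; apply: mulr_ge0 => //; rewrite indicE ler0n.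
have NB : NN B2 by apply: NN_EFin; [move=> x; exact: sqr_ge0|exact: measurable_funX].
have NI : NN IC by apply: NN_EFin; [move=> x; rewrite indicE ler0n|exact: measurable_indic].
have NIA : NN (fun y => (\1_(A k) y)%:E : \bar R).
  by apply: NN_EFin; [move=> x; rewrite indicE ler0n|exact: (measurable_indic (mA _))].
have Nf1 n : NN (fun y => (\1_(A k) y)%:E * Sn P n B2 y).
  have [h1 h2] := NIA; have [h3 h4] := @NN_Sn _ _ _ P n B2 NB.
  by split; [move=> x; exact: mule_ge0|exact: emeasurable_funM].
have s0 : 0 <= ereal_sup S.
  apply: le_trans (ereal_sup_ubound (_ : S _)); last by exists N0 => /=.
  by apply: integral_ge0 => y _; exact: (Nf1 N0).1.
have sfin : ereal_sup S \is a fin_num by rewrite ge0_fin_numE.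
pose M := (fine (ereal_sup S) + 1)%R.
have M0 : (0 < M)%R by rewrite /M; have := fine_ge0 s0; lra.
have hM n : (N0 <= n)%N -> \int[m]_y ((\1_(A k) y)%:E * Sn P n B2 y) <= M%:E.
  move=> hn; apply: le_trans (ereal_sup_ubound (_ : S _)) _; first by exists n.
  by rewrite -(fineK sfin) lee_fin /M lerDl.
have afin : m (A k) \is a fin_num := fin_num_measure m _ (mA _).
pose a := fine (m (A k)).
have ha : m (A k) = a%:E by rewrite fineK.
have a0 : (0 < a)%R by rewrite -lte_fin -ha.
pose eps := (a / (4 * M))%R; pose c := (M / a)%R.
have e0 : (0 < eps)%R by rewrite /eps divr_gt0 // mulr_gt0.
have c0 : (0 < c)%R by rewrite /c divr_gt0.
have ec : (4 * eps * c = 1)%R by rewrite /eps /c; field; rewrite ?gt_eqF.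
have hd : forall x, \int[P x]_y V' y + 1 <= V' x + g x.
  move=> x; have := drift x; rewrite -EFinM -EFinB -EFinD => hx.
  apply: le_trans (leeD hx (lexx 1)) _.
  by rewrite -EFinD /V' /g -EFinD lee_fin; lra.
have hg : forall y, g y <= eps%:E * B2 y + c%:E * IC y.
  move=> y; rewrite /g /B2 /IC -!EFinM -EFinD lee_fin indicE.
  case: (y \in C) => /=; rewrite ?mulr1 ?mulr0; last first.
    by apply: addr_ge0; [apply: mulr_ge0; [exact: ltW|exact: sqr_ge0]|lra].
  have := sqr_ge0 (2 * eps * b y - 1)%R; nra.
exists (maxn N0 (2 * k.+1)); split; first by rewrite leq_max muln_gt0 orbT.
apply: (@lt_le_trans _ _ ((a ^+ 2 / (4 * M))%:E)).
  by rewrite lte_fin divr_gt0 ?mulr_gt0 ?exprn_gt0.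
apply: le_ereal_inf_tmp => _ [n /= hn <-].
have hN0n : (N0 <= n)%N by apply: leq_trans hn; rewrite leq_maxl.
have h2n : (2 * k.+1 <= n)%N by apply: leq_trans hn; rewrite leq_maxr.
have n0 : (0 < n)%N by apply: leq_trans h2n; rewrite muln_gt0.
have NS := @NN_Sn _ _ _ P n IC NI.
have hp : forall y, (1 / 2)%:E * (\1_(A k) y)%:E <=
    eps%:E * ((\1_(A k) y)%:E * Sn P n B2 y) + c%:E * Sn P n IC y.
  move=> y; rewrite indicE; have [yA|yA] := boolP (y \in A k) => /=.
  - rewrite mule1 mul1e.
    apply: (Sn_bound V' g B2 IC eps c NV Ng NB NI e0 c0 hd hg n y n0).
    rewrite /V' lee_fin; move: yA; rewrite inE /A /= => yA.
    have : ((2 * k.+1)%:R <= n%:R :> R)%R by rewrite ler_nat.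
    rewrite natrM; lra.
  - rewrite mule0; apply: adde_ge0.
      apply: mule_ge0; first by rewrite lee_fin ltW.
      by rewrite mul0e.
    apply: mule_ge0; first by rewrite lee_fin ltW.
    exact: NS.1.
have NZ1 := @NN_Z _ _ _ eps _ (ltW e0) (Nf1 n).
have NZ2 := @NN_Z _ _ _ c _ (ltW c0) NS.
have I1 : \int[m]_y ((1 / 2)%:E * (\1_(A k) y)%:E) = (1 / 2)%:E * a%:E.
  rewrite ge0_integralZl //.
  all: try (by move=> y _; exact: NIA.1).
  all: try (by rewrite lee_fin; lra).
  all: try exact: NIA.2.
  rewrite integral_indic ?setIT; first (congr (_ * _); exact: ha).
  exact: measurableT.
  exact: (mA k.+1%:R).
have I2 : \int[m]_y (eps%:E * ((\1_(A k) y)%:E * Sn P n B2 y) + c%:E * Sn P n IC y)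
  = eps%:E * \int[m]_y ((\1_(A k) y)%:E * Sn P n B2 y) +
    c%:E * \int[m]_y Sn P n IC y.
  rewrite ge0_integralD //.
  all: try (by move=> y _; exact: NZ1.1).
  all: try (by move=> y _; exact: NZ2.1).
  all: try exact: NZ1.2.
  all: try exact: NZ2.2.
  rewrite ge0_integralZl //.
  all: try exact: (Nf1 n).2.
  all: try (by move=> y _; exact: (Nf1 n).1).
  all: try (by rewrite lee_fin ltW).
  rewrite ge0_integralZl //.
  all: try exact: NS.2.
  all: try (by move=> y _; exact: NS.1).
  all: try (by rewrite lee_fin ltW).
have hI : (1 / 2)%:E * a%:E <= eps%:E * M%:E + c%:E * \int[m]_y Sn P n IC y.
  rewrite -I1; apply: le_trans (_ : _ <= \int[m]_y (eps%:E * ((\1_(A k) y)%:E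
     * Sn P n B2 y) + c%:E * Sn P n IC y)) _.
    apply: ge0_le_integral => //.
    all: try (move=> y _; apply: mule_ge0; [by rewrite lee_fin; lra|exact: NIA.1]).
    - exact: (measurable_funeM _ NIA.2).
    - exact: emeasurable_funD NZ1.2 NZ2.2.
  rewrite I2; apply: leeD => //; apply: lee_wpmul2l; first by rewrite lee_fin ltW.
  exact: hM.
have J0 : 0 <= \int[m]_y Sn P n IC y by apply: integral_ge0 => y _; exact: NS.1.
move: hI J0; case: (\int[m]_y Sn P n IC y) => [j| |] hI J0 //; last by rewrite leey.
rewrite -!EFinM -EFinD lee_fin in hI; rewrite lee_fin.
have e1 : (eps * M = a / 4)%R by rewrite /eps; field; rewrite gt_eqF.
rewrite e1 in hI.
have hj : (a / 4 <= c * j)%R by lra.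
rewrite -(ler_pM2l c0); apply: le_trans hj.
rewrite le_eqVlt; apply/orP; left; apply/eqP.
by rewrite /c; field; rewrite !gt_eqF.
Qed.
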